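(* Let $U$ be a model of $\mathrm{ZFCU}_R$. Then $U\models$ Collection if and only if the Łoś theorem holds for all internal ultrapowers of $U$.
   Context: $\mathrm{ZFCU}_R$ is ZFC with urelements (language $\{\in,\mathcal{A}\}$, $\mathcal{A}$ the urelement predicate), formulated with Replacement rather than Collection, with AC. Collection: for every formula $\varphi$, $\forall w,u(\forall x\in w\exists y\varphi(x,y,u)\rightarrow\exists v\forall x\in w\exists y\in v\varphi(x,y,u))$. Internal ultrapower: let $F,x\in U$ with $U\models$ ''$F$ is an ultrafilter on $x$''. For $f,g\in U$ that $U$ thinks are functions on $x$, put $f=_Fg$ iff $U\models\{y\in x: f(y)=g(y)\}\in F$; $[f]$ is the $=_F$-class of $f$ among such functions in $U$, and $U/F$ is the set of these classes, with $[g]\,\hat\in\,[f]$ iff $U\models\{y\in x:g(y)\in f(y)\}\in F$ and $\hat{\mathcal{A}}([f])$ iff $U\models\{y\in x:\mathcal{A}(f(y))\}\in F$. The internal ultrapower is $\langle U/F,\hat\in,\hat{\mathcal{A}}\rangle$. The Łoś theorem holds for $U/F$ if for every formula $\varphi$ and $[f_1],\dots,[f_n]\in U/F$: $U/F\models\varphi([f_1],\dots,[f_n])$ iff $U\models\{y\in x:\varphi(f_1(y),\dots,f_n(y))\}\in F$. *)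

(* Defs.v *)
From Stdlib Require Import Arith.

Record structure := Structure {
  dom :> Type;
  smem : dom -> dom -> Prop;
  sur : dom -> Prop            (* interpretation of the urelement predicate A *)
}.

Inductive form : Type :=
| FMem : nat -> nat -> form
| FEq  : nat -> nat -> form
| FUr  : nat -> form
| FBot : form
| FNot : form -> form
| FAnd : form -> form -> form
| FOr  : form -> form -> form
| FImp : form -> form -> form
| FAll : nat -> form -> form
| FEx  : nat -> form -> form.

Definition upd {M : Type} (e : nat -> M) (i : nat) (a : M) : nat -> M :=
  fun j => if Nat.eqb j i then a else e j.

Fixpoint sat (M : structure) (e : nat -> M) (phi : form) : Prop :=
  match phi with
  | FMem i j => smem M (e i) (e j)
  | FEq i j => e i = e j
  | FUr i => sur M (e i)
  | FBot => False
  | FNot p => ~ sat M e p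
  | FAnd p q => sat M e p /\ sat M e q
  | FOr p q => sat M e p \/ sat M e q
  | FImp p q => sat M e p -> sat M e q
  | FAll i p => forall a : M, sat M (upd e i a) p
  | FEx i p => exists a : M, sat M (upd e i a) p
  end.

Section Internal.
Variable U : structure.
Local Notation "a ∈ b" := (smem U a b) (at level 70).
Local Notation A := (sur U).

Definition is_sing (z a : U) : Prop := ~ A z /\ forall w, w ∈ z <-> w = a.
Definition is_upair (z a b : U) : Prop := ~ A z /\ forall w, w ∈ z <-> (w = a \/ w = b).
Definition is_opair (p a b : U) : Prop :=
  ~ A p /\ forall w, w ∈ p <-> (is_sing w a \/ is_upair w a b).
Definition app (f a b : U) : Prop := exists p, p ∈ f /\ is_opair p a b.
Definition fun_on (f x : U) : Prop :=
  ~ A f /\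
  (forall p, p ∈ f -> exists a b, a ∈ x /\ is_opair p a b) /\
  (forall a, a ∈ x -> exists b, app f a b /\ forall b', app f a b' -> b' = b).

Definition subset_of (s x : U) : Prop := ~ A s /\ forall z, z ∈ s -> z ∈ x.

Definition is_ultrafilter (F x : U) : Prop :=
  ~ A F /\ ~ A x /\
  (forall s, s ∈ F -> subset_of s x) /\
  x ∈ F /\
  (forall s, s ∈ F -> exists z, z ∈ s) /\
  (forall a b c, a ∈ F -> b ∈ F -> ~ A c ->
     (forall z, z ∈ c <-> (z ∈ a /\ z ∈ b)) -> c ∈ F) /\
  (forall a b, a ∈ F -> subset_of b x -> (forall z, z ∈ a -> z ∈ b) -> b ∈ F) /\
  (forall s, subset_of s x ->
     s ∈ F \/ (forall c, ~ A c -> (forall z, z ∈ c <-> (z ∈ x /\ ~ z ∈ s)) -> c ∈ F)).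

Definition well_orders (r x : U) : Prop :=
  let lt a b := exists p, p ∈ r /\ is_opair p a b in
  (forall a, a ∈ x -> ~ lt a a) /\
  (forall a b c, a ∈ x -> b ∈ x -> c ∈ x -> lt a b -> lt b c -> lt a c) /\
  (forall a b, a ∈ x -> b ∈ x -> a = b \/ lt a b \/ lt b a) /\
  (forall s, subset_of s x -> (exists z, z ∈ s) ->
     exists m, m ∈ s /\ forall z, z ∈ s -> ~ lt z m).

Definition Ax_Extensionality : Prop :=
  forall a b, ~ A a -> ~ A b -> (forall z, z ∈ a <-> z ∈ b) -> a = b.
Definition Ax_Urelements : Prop := forall a, A a -> forall z, ~ z ∈ a.
Definition Ax_Foundation : Prop :=
  forall a, (exists y, y ∈ a) -> exists y, y ∈ a /\ forall z, z ∈ y -> ~ z ∈ a.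
Definition Ax_Pairing : Prop :=
  forall a b, exists p, ~ A p /\ forall z, z ∈ p <-> (z = a \/ z = b).
Definition Ax_Union : Prop :=
  forall a, exists u, ~ A u /\ forall z, z ∈ u <-> exists y, y ∈ a /\ z ∈ y.
Definition Ax_Powerset : Prop :=
  forall a, exists p, ~ A p /\ forall s, s ∈ p <-> subset_of s a.
Definition Ax_Infinity : Prop :=
  exists w, ~ A w /\
    (exists e, e ∈ w /\ ~ A e /\ forall z, ~ z ∈ e) /\
    (forall y, y ∈ w -> exists s, s ∈ w /\ ~ A s /\ forall z, z ∈ s <-> (z ∈ y \/ z = y)).
(* Separation schema: variable i is the separated variable, e gives parameters *)
Definition Ax_Separation : Prop :=
  forall (phi : form) (i : nat) (e : nat -> U) (a : U),
    exists s, ~ A s /\ forall z, z ∈ s <-> (z ∈ a /\ sat U (upd e i z) phi).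
(* Replacement schema (x is variable i, y is variable j, parameters from e) *)
Definition Ax_Replacement : Prop :=
  forall (phi : form) (i j : nat) (e : nat -> U) (w : U),
    (forall a, a ∈ w -> exists b, sat U (upd (upd e i a) j b) phi /\
        forall b', sat U (upd (upd e i a) j b') phi -> b' = b) ->
    exists v, forall a, a ∈ w -> exists b, b ∈ v /\ sat U (upd (upd e i a) j b) phi.
Definition Ax_Choice : Prop := forall a, ~ A a -> exists r, ~ A r /\ well_orders r a.

Definition ZFCU_R : Prop :=
  Ax_Extensionality /\ Ax_Urelements /\ Ax_Foundation /\ Ax_Pairing /\ Ax_Union /\
  Ax_Powerset /\ Ax_Infinity /\ Ax_Separation /\ Ax_Replacement /\ Ax_Choice.

Definition Collection : Prop :=
  forall (phi : form) (i j : nat) (e : nat -> U) (w : U),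
    (forall a, a ∈ w -> exists b, sat U (upd (upd e i a) j b) phi) ->
    exists v, forall a, a ∈ w -> exists b, b ∈ v /\ sat U (upd (upd e i a) j b) phi.

Section Ultrapower.
Variables F x : U.

Definition inF (P : U -> Prop) : Prop :=
  exists s, s ∈ F /\ ~ A s /\ forall y, y ∈ s <-> (y ∈ x /\ P y).

Definition eqF (f g : U) : Prop :=
  inF (fun y => exists v, app f y v /\ app g y v).

Definition ucls (f : U) : U -> Prop := fun g => fun_on g x /\ eqF f g.

Definition uclass : Type :=
  { C : U -> Prop | exists f, fun_on f x /\ C = ucls f }.

Definition umem (C D : uclass) : Prop :=
  exists g f, proj1_sig C g /\ proj1_sig D f /\
    inF (fun y => exists a b, app g y a /\ app f y b /\ a ∈ b).

Definition uur (C : uclass) : Prop :=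
  exists f, proj1_sig C f /\ inF (fun y => exists a, app f y a /\ A a).

Definition ultrapower : structure := Structure uclass umem uur.

Definition Los : Prop :=
  forall (phi : form) (rho : nat -> uclass) (f : nat -> U),
    (forall k, proj1_sig (rho k) (f k)) ->
    (sat ultrapower rho phi <->
     inF (fun y => exists g : nat -> U, (forall k, app (f k) y (g k)) /\ sat U g phi)).

End Ultrapower.
End Internal.

(* Main.v *)
Require Import Defs.
From Stdlib Require Import Arith Lia Bool Classical ClassicalEpsilon FunctionalExtensionality PropExtensionality ProofIrrelevance Setoid Morphisms.


Lemma upd_eq {M : Type} (e : nat -> M) i a : upd e i a i = a.
Proof. unfold upd. now rewrite Nat.eqb_refl. Qed.
Lemma upd_neq {M : Type} (e : nat -> M) i j a : j <> i -> upd e i a j = e j.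
Proof. intro H. unfold upd. apply Nat.eqb_neq in H. now rewrite H. Qed.

Fixpoint vb (phi : form) : nat :=
  match phi with
  | FMem i j => S (max i j)
  | FEq i j => S (max i j)
  | FUr i => S i
  | FBot => 0
  | FNot p => vb p
  | FAnd p q => max (vb p) (vb q)
  | FOr p q => max (vb p) (vb q)
  | FImp p q => max (vb p) (vb q)
  | FAll i p => max (S i) (vb p)
  | FEx i p => max (S i) (vb p)
  end.

Lemma sat_ext (M : structure) (phi : form) : forall e e' : nat -> M,
  (forall k, k < vb phi -> e k = e' k) -> (sat M e phi <-> sat M e' phi).
Proof.
  induction phi; intros e e' H; cbn [sat].
  - rewrite !H by (simpl; lia). tauto.
  - rewrite !H by (simpl; lia). tauto.
  - rewrite !H by (simpl; lia). tauto.
  - tauto.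
  - rewrite (IHphi e e') by auto. tauto.
  - change (vb (FAnd phi1 phi2)) with (max (vb phi1) (vb phi2)) in H.
    rewrite (IHphi1 e e'), (IHphi2 e e') by (intros; apply H; lia). tauto.
  - change (vb (FOr phi1 phi2)) with (max (vb phi1) (vb phi2)) in H.
    rewrite (IHphi1 e e'), (IHphi2 e e') by (intros; apply H; lia). tauto.
  - change (vb (FImp phi1 phi2)) with (max (vb phi1) (vb phi2)) in H.
    rewrite (IHphi1 e e'), (IHphi2 e e') by (intros; apply H; lia). tauto.
  - change (vb (FAll n phi)) with (max (S n) (vb phi)) in H.
    split; intros H1 a; specialize (H1 a); revert H1; apply IHphi;
      intros k Hk; unfold upd; destruct (Nat.eqb k n); auto; (apply H || (symmetry; apply H)); lia.
  - change (vb (FEx n phi)) with (max (S n) (vb phi)) in H.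
    split; intros [a H1]; exists a; revert H1; apply IHphi;
      intros k Hk; unfold upd; destruct (Nat.eqb k n); auto; (apply H || (symmetry; apply H)); lia.
Qed.

Lemma sat_ext_all (M : structure) (phi : form) (e e' : nat -> M) :
  (forall k, e k = e' k) -> (sat M e phi <-> sat M e' phi).
Proof. intros H. apply sat_ext. auto. Qed.

Fixpoint ren (s : nat -> nat) (phi : form) : form :=
  match phi with
  | FMem i j => FMem (s i) (s j)
  | FEq i j => FEq (s i) (s j)
  | FUr i => FUr (s i)
  | FBot => FBot
  | FNot p => FNot (ren s p)
  | FAnd p q => FAnd (ren s p) (ren s q)
  | FOr p q => FOr (ren s p) (ren s q)
  | FImp p q => FImp (ren s p) (ren s q)
  | FAll i p => FAll (s i) (ren s p)
  | FEx i p => FEx (s i) (ren s p)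
  end.

Lemma sat_ren (M : structure) (s : nat -> nat) (Hs : forall a b, s a = s b -> a = b)
  (phi : form) : forall e : nat -> M, sat M e (ren s phi) <-> sat M (fun k => e (s k)) phi.
Proof.
  induction phi; intros e; simpl; try tauto.
  - rewrite IHphi; tauto.
  - rewrite IHphi1, IHphi2; tauto.
  - rewrite IHphi1, IHphi2; tauto.
  - rewrite IHphi1, IHphi2; tauto.
  - split; intros H a; specialize (H a); [rewrite IHphi in H|rewrite IHphi]; revert H;
      apply sat_ext_all; intro k; unfold upd;
      destruct (Nat.eqb_spec k n); destruct (Nat.eqb_spec (s k) (s n)); subst; auto;
      exfalso; auto.
  - split; intros [a H]; exists a; [rewrite IHphi in H|rewrite IHphi]; revert H;
      apply sat_ext_all; intro k; unfold upd;
      destruct (Nat.eqb_spec k n); destruct (Nat.eqb_spec (s k) (s n)); subst; auto;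
      exfalso; auto.
Qed.

Ltac eqbs := repeat match goal with
  | |- context [Nat.eqb ?x ?y] =>
      first [ replace (Nat.eqb x y) with true by (symmetry; apply Nat.eqb_eq; lia)
            | replace (Nat.eqb x y) with false by (symmetry; apply Nat.eqb_neq; lia) ]
  end; cbv beta iota.

Definition FIff p q := FAnd (FImp p q) (FImp q p).


Definition SING z a := let t := S (z + a) in
  FAnd (FNot (FUr z)) (FAll t (FIff (FMem t z) (FEq t a))).
Definition UPAIR z a b := let t := S (z + a + b) in
  FAnd (FNot (FUr z)) (FAll t (FIff (FMem t z) (FOr (FEq t a) (FEq t b)))).
Definition OPAIR p a b := let w := S (p + a + b) in
  FAnd (FNot (FUr p)) (FAll w (FIff (FMem w p) (FOr (SING w a) (UPAIR w a b)))).
Definition APP f a b := let q := S (f + a + b) in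
  FEx q (FAnd (FMem q f) (OPAIR q a b)).
Definition SUBS s x := let t := S (s + x) in
  FAnd (FNot (FUr s)) (FAll t (FImp (FMem t s) (FMem t x))).

Section Basic.
Variable U : structure.
Local Notation "a ∈ b" := (smem U a b) (at level 70).
Local Notation A := (sur U).

Lemma SING_ok z a e : sat U e (SING z a) <-> is_sing U (e z) (e a).
Proof. unfold SING, FIff, is_sing; cbn [sat]; unfold upd; eqbs. firstorder. Qed.
Lemma UPAIR_ok z a b e : sat U e (UPAIR z a b) <-> is_upair U (e z) (e a) (e b).
Proof. unfold UPAIR, FIff, is_upair; cbn [sat]; unfold upd; eqbs. firstorder. Qed.
Lemma OPAIR_ok p a b e : sat U e (OPAIR p a b) <-> is_opair U (e p) (e a) (e b).
Proof.
  unfold OPAIR, FIff, is_opair; cbn [sat]. setoid_rewrite SING_ok. setoid_rewrite UPAIR_ok.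
  unfold upd; eqbs. firstorder.
Qed.
Lemma APP_ok f a b e : sat U e (APP f a b) <-> app U (e f) (e a) (e b).
Proof.
  unfold APP, app; cbn [sat]. setoid_rewrite OPAIR_ok. unfold upd; eqbs. firstorder.
Qed.
Lemma SUBS_ok s x e : sat U e (SUBS s x) <-> subset_of U (e s) (e x).
Proof. unfold SUBS, subset_of; cbn [sat]; unfold upd; eqbs. firstorder. Qed.

End Basic.


Section ZF.
Variable U : structure.
Hypothesis HZ : ZFCU_R U.
Local Notation "a ∈ b" := (smem U a b) (at level 70).
Local Notation A := (sur U).

Lemma zf_ext : Ax_Extensionality U. Proof. apply HZ. Qed.
Lemma zf_urel : Ax_Urelements U. Proof. apply HZ. Qed.
Lemma zf_found : Ax_Foundation U. Proof. apply HZ. Qed.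
Lemma zf_pair : Ax_Pairing U. Proof. apply HZ. Qed.
Lemma zf_union : Ax_Union U. Proof. apply HZ. Qed.
Lemma zf_power : Ax_Powerset U. Proof. apply HZ. Qed.
Lemma zf_sep : Ax_Separation U. Proof. apply HZ. Qed.
Lemma zf_repl : Ax_Replacement U. Proof. apply HZ. Qed.
Lemma zf_choice : Ax_Choice U. Proof. apply HZ. Qed.


Lemma ex_empty : exists z, ~ A z /\ forall w, ~ w ∈ z.
Proof.
  destruct (proj1 (proj2 (proj2 (proj2 (proj2 (proj2 (proj2 HZ))))))) as [w [Hw _]].
  destruct (zf_sep FBot 0 (fun _ => w) w) as [s [Hs Hs2]].
  exists s; split; auto. intros z Hz. apply Hs2 in Hz. simpl in Hz. tauto.
Qed.

Lemma ex_upair a b : exists z, is_upair U z a b.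
Proof. destruct (zf_pair a b) as [z Hz]. exists z. exact Hz. Qed.
Lemma ex_sing a : exists z, is_sing U z a.
Proof.
  destruct (zf_pair a a) as [z [Hz1 Hz2]]. exists z. split; auto.
  intro w; rewrite Hz2; tauto.
Qed.
Lemma ex_opair a b : exists p, is_opair U p a b.
Proof.
  destruct (ex_sing a) as [s Hs]. destruct (ex_upair a b) as [u Hu].
  destruct (zf_pair s u) as [p [Hp1 Hp2]]. exists p. split; auto.
  intro w. rewrite Hp2. split.
  - intros [->| ->]; auto.
  - intros [H|H].
    + left. apply zf_ext; [apply H|apply Hs|]. intro z. rewrite (proj2 H), (proj2 Hs). tauto.
    + right. apply zf_ext; [apply H|apply Hu|]. intro z. rewrite (proj2 H), (proj2 Hu). tauto.
Qed.

Lemma sing_mem a : forall z, is_sing U z a -> a ∈ z.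
Proof. intros z [_ H]. apply H. auto. Qed.
Lemma upair_mem1 a b : forall z, is_upair U z a b -> a ∈ z.
Proof. intros z [_ H]. apply H. auto. Qed.
Lemma upair_mem2 a b : forall z, is_upair U z a b -> b ∈ z.
Proof. intros z [_ H]. apply H. auto. Qed.

Lemma opair_inj p a b c d : is_opair U p a b -> is_opair U p c d -> a = c /\ b = d.
Proof.
  intros [_ H1] [_ H2].
  assert (Hac : a = c).
  { destruct (ex_sing a) as [s Hs].
    assert (Hsp : s ∈ p) by (apply H1; auto).
    apply H2 in Hsp. destruct Hsp as [[_ Hc]|[_ Hc]].
    - apply Hc. apply (proj2 Hs). auto.
    - assert (c ∈ s) by (apply Hc; auto). apply (proj2 Hs) in H. auto. }
  subst c. split; auto.
  destruct (ex_upair a b) as [u Hu].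
  assert (Hup : u ∈ p) by (apply H1; auto).
  apply H2 in Hup. destruct Hup as [[_ Hc]|[_ Hc]].
  - assert (Hb : b = a) by (apply Hc; apply (proj2 Hu); auto). subst b.
    destruct (ex_upair a d) as [u' Hu'].
    assert (Hup : u' ∈ p) by (apply H2; auto).
    apply H1 in Hup. assert (Hd : d ∈ u') by (apply (proj2 Hu'); auto).
    destruct Hup as [[_ Hc']|[_ Hc']]; apply Hc' in Hd; intuition.
  - assert (Hb : b ∈ u) by (apply (proj2 Hu); auto). apply Hc in Hb.
    destruct Hb as [Hb|Hb]; auto. subst b.
    assert (Hd : d ∈ u) by (apply Hc; auto). apply (proj2 Hu) in Hd. intuition.
Qed.

Lemma ex_union2 a b : exists z, ~ A z /\ forall w, w ∈ z <-> (w ∈ a \/ w ∈ b).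
Proof.
  destruct (zf_pair a b) as [p [Hp1 Hp2]]. destruct (zf_union p) as [z [Hz1 Hz2]].
  exists z. split; auto. intro w. rewrite Hz2. split.
  - intros [y [Hy Hw]]. apply Hp2 in Hy. destruct Hy; subst; auto.
  - intros [H|H]; [exists a|exists b]; rewrite Hp2; auto.
Qed.

Lemma ex_prod x v : exists P, ~ A P /\ forall p, p ∈ P <-> exists a b, a ∈ x /\ b ∈ v /\ is_opair U p a b.
Proof.
  destruct (ex_union2 x v) as [W [HW1 HW2]].
  destruct (zf_power W) as [P1 [HP1 HP1']].
  destruct (zf_power P1) as [P2 [HP2 HP2']].
  destruct (zf_sep (FEx 3 (FEx 4 (FAnd (FMem 3 1) (FAnd (FMem 4 2) (OPAIR 0 3 4))))) 0
     (fun k => match k with 1 => x | _ => v end) P2) as [P [HP HP']].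
  exists P. split; auto. intro p. rewrite HP'. cbn [sat]. setoid_rewrite OPAIR_ok.
  unfold upd; eqbs. split.
  - intros [_ [a [b [H1 [H2 H3]]]]]. eauto.
  - intros [a [b [H1 [H2 H3]]]]. split; [|eauto].
    apply HP2'. split; [apply H3|]. intros w Hw. apply HP1'. apply H3 in Hw.
    destruct Hw as [Hw|Hw]; split; try apply Hw; intros z Hz; apply HW2;
      apply (proj2 Hw) in Hz; intuition congruence.
Qed.

Definition fv (f y : U) : U := epsilon (inhabits y) (fun b => app U f y b).

Lemma fv_spec f x y : fun_on U f x -> y ∈ x -> app U f y (fv f y) /\ forall b, app U f y b -> b = fv f y.
Proof.
  intros [_ [_ Hf]] Hy. destruct (Hf y Hy) as [b [Hb Hu]].
  assert (app U f y (fv f y)) by (unfold fv; apply epsilon_spec; eauto).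
  split; auto. intros b' Hb'. rewrite (Hu b' Hb'). symmetry; auto.
Qed.

Lemma fv_app f x y b : fun_on U f x -> y ∈ x -> (app U f y b <-> b = fv f y).
Proof.
  intros Hf Hy. destruct (fv_spec f x y Hf Hy) as [H1 H2]. split; auto. intros ->; auto.
Qed.

Lemma build_fun (x V : U) (phi : form) (e : nat -> U) :
  let R := fun a b => sat U (upd (upd e 0 a) 1 b) phi in
  (forall a, a ∈ x -> exists b, R a b /\ forall b', R a b' -> b' = b) ->
  (forall a b, a ∈ x -> R a b -> b ∈ V) ->
  exists g, fun_on U g x /\ forall a b, a ∈ x -> (app U g a b <-> R a b).
Proof.
  intros R Hex HV.
  destruct (ex_prod x V) as [P [HP HP']].
  set (N := S (S (vb phi))).
  destruct (zf_sep (FEx 0 (FEx 1 (FAnd (OPAIR N 0 1) phi))) N e P) as [g [Hg Hg']].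
  assert (Hg2 : forall p, p ∈ g <-> p ∈ P /\ exists a b, is_opair U p a b /\ R a b).
  { intro p. rewrite Hg'. cbn [sat]. setoid_rewrite OPAIR_ok.
    unfold R. apply and_iff_compat_l. split; intros [a [b [H1 H2]]]; exists a, b; split;
    revert H1 H2; unfold upd; eqbs; auto; intros _; apply sat_ext; intros k Hk; unfold upd;
    destruct (Nat.eqb_spec k 1); auto; destruct (Nat.eqb_spec k 0); auto;
    destruct (Nat.eqb_spec k N); auto; lia. }
  assert (Happ : forall a b, a ∈ x -> (app U g a b <-> R a b)).
  { intros a b Ha. split.
    - intros [p [Hp Hpo]]. apply Hg2 in Hp. destruct Hp as [_ [a' [b' [Ho HR]]]].
      destruct (opair_inj _ _ _ _ _ Ho Hpo). subst; auto.
    - intros HR. destruct (ex_opair a b) as [p Hp]. exists p; split; auto.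
      apply Hg2. split; [apply HP'; exists a, b; split; auto; split; eauto|eauto]. }
  exists g. split; [|exact Happ]. split; [auto|split].
  - intros p Hp. apply Hg2 in Hp. destruct Hp as [Hp _]. apply HP' in Hp.
    destruct Hp as [a [b [H1 [H2 H3]]]]. eauto.
  - intros a Ha. destruct (Hex a Ha) as [b [Hb Hu]]. exists b. split.
    + apply Happ; auto.
    + intros b' Hb'. apply Hu. apply Happ; auto.
Qed.

End ZF.


Fixpoint TR (n skip : nat) (phi : form) : form :=
  match n with
  | 0 => ren (fun k => 3 * k) phi
  | S m => if Nat.eqb m skip then TR m skip phi
           else FEx (3 * m) (FAnd (APP (3 * m + 2) 1 (3 * m)) (TR m skip phi))
  end.

Lemma TR_ok (U : structure) skip phi : forall n (e : nat -> U),
  sat U e (TR n skip phi) <->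
  exists c : nat -> U, (forall k, k < n -> k <> skip -> app U (e (3 * k + 2)) (e 1) (c k)) /\
    sat U (fun k => if (k <? n) && negb (k =? skip) then c k else e (3 * k)) phi.
Proof.
  induction n; intros e; cbn [TR].
  - rewrite sat_ren by (intros; lia). split.
    + intros H. exists e. split; [intros; lia|]. revert H; apply sat_ext_all; intro k.
      destruct (Nat.ltb_spec k 0); [lia|]. reflexivity.
    + intros [c [_ H]]. revert H; apply sat_ext_all; intro k.
      destruct (Nat.ltb_spec k 0); [lia|]. reflexivity.
  - destruct (Nat.eqb_spec n skip).
    + rewrite IHn. split; intros [c [H1 H2]]; exists c; split.
      * intros k Hk Hk'. apply H1; lia.
      * revert H2; apply sat_ext_all; intro k.
        destruct (Nat.ltb_spec k n); destruct (Nat.ltb_spec k (S n)); destruct (Nat.eqb_spec k skip);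
        simpl; auto; lia.
      * intros k Hk Hk'. apply H1; lia.
      * revert H2; apply sat_ext_all; intro k.
        destruct (Nat.ltb_spec k n); destruct (Nat.ltb_spec k (S n)); destruct (Nat.eqb_spec k skip);
        simpl; auto; lia.
    + cbn [sat]. setoid_rewrite APP_ok. setoid_rewrite IHn. split.
      * intros [a [Ha [c [H1 H2]]]]. exists (upd c n a). split.
        -- intros k Hk Hk'. unfold upd. destruct (Nat.eqb_spec k n).
           ++ subst. revert Ha. rewrite !upd_neq by lia. rewrite upd_eq. auto.
           ++ specialize (H1 k ltac:(lia) Hk'). revert H1. rewrite !upd_neq by lia. auto.
        -- revert H2; apply sat_ext_all; intro k. unfold upd.
           destruct (Nat.ltb_spec k n); destruct (Nat.ltb_spec k (S n)); destruct (Nat.eqb_spec k skip);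
           destruct (Nat.eqb_spec k n); destruct (Nat.eqb_spec (3 * k) (3 * n)); simpl; auto; lia.
      * intros [c [H1 H2]]. exists (c n). split.
        -- specialize (H1 n ltac:(lia) n0). rewrite upd_neq by lia. rewrite upd_neq by lia.
           rewrite upd_eq. auto.
        -- exists c. split.
           ++ intros k Hk Hk'. rewrite !upd_neq by lia. apply H1; auto.
           ++ revert H2; apply sat_ext_all; intro k. unfold upd.
              destruct (Nat.ltb_spec k n); destruct (Nat.ltb_spec k (S n)); destruct (Nat.eqb_spec k skip);
              destruct (Nat.eqb_spec (3 * k) (3 * n)); simpl; auto; try lia.
              assert (k = n) by lia. subst. auto.
Qed.


Definition enc {U : structure} (f : nat -> U) : nat -> U := fun v => f ((v - 2) / 3).
Lemma enc_spec {U : structure} (f : nat -> U) k : enc f (3 * k + 2) = f k.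
Proof. unfold enc. f_equal. replace (3 * k + 2 - 2) with (k * 3) by lia. apply Nat.div_mul; lia. Qed.

Definition shift10 {M : Type} (E : nat -> M) : nat -> M := fun k => E (10 + k).
Definition RR (M : structure) (chi : form) (i : nat) (E : nat -> M) (a b : M) : Prop :=
  sat M (upd (upd E 1 a) (3 * i) b) chi.
Definition Rf (chi : form) (i ya yb : nat) : form :=
  FEx 11 (FAnd (FEq 11 ya) (FEx (3 * i + 10) (FAnd (FEq (3 * i + 10) yb) (ren (fun k => 10 + k) chi)))).

Lemma Rf_ok (M : structure) chi i ya yb : ya < 10 -> yb < 10 -> forall E : nat -> M,
  sat M E (Rf chi i ya yb) <-> RR M chi i (shift10 E) (E ya) (E yb).
Proof.
  intros Ha Hb E. unfold Rf, RR. cbn [sat].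
  split.
  - intros [a [H1 [b [H2 H]]]]. rewrite (sat_ren M (fun k => 10 + k)) in H by (intros; lia).
    rewrite upd_eq, upd_neq in H1 by lia. rewrite upd_eq in H2. rewrite !upd_neq in H2 by lia.
    subst. revert H. apply sat_ext_all. intro k. unfold upd, shift10.
    destruct (Nat.eqb_spec (10 + k) (3 * i + 10)); destruct (Nat.eqb_spec k (3 * i)); try lia; auto;
    destruct (Nat.eqb_spec (10 + k) 11); destruct (Nat.eqb_spec k 1); try lia; auto.
  - intros H. exists (E ya). split. { rewrite upd_eq, upd_neq by lia. auto. }
    exists (E yb). split. { rewrite upd_eq. rewrite !upd_neq by lia. auto. }
    rewrite (sat_ren M (fun k => 10 + k)) by (intros; lia).
    revert H. apply sat_ext_all. intro k. unfold upd, shift10.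
    destruct (Nat.eqb_spec (10 + k) (3 * i + 10)); destruct (Nat.eqb_spec k (3 * i)); try lia; auto;
    destruct (Nat.eqb_spec (10 + k) 11); destruct (Nat.eqb_spec k 1); try lia; auto.
Qed.

Lemma shift_upd {M : Type} (E : nat -> M) v a : v < 10 -> shift10 (upd E v a) = shift10 E.
Proof. intros Hv. apply functional_extensionality. intro k. unfold shift10. apply upd_neq. lia. Qed.
Lemma shift_upd0 {M : Type} (E : nat -> M) a : shift10 (upd E 0 a) = shift10 E.
Proof. apply shift_upd; lia. Qed.
Lemma shift_upd1 {M : Type} (E : nat -> M) a : shift10 (upd E 1 a) = shift10 E.
Proof. apply shift_upd; lia. Qed.
Lemma shift_upd5 {M : Type} (E : nat -> M) a : shift10 (upd E 5 a) = shift10 E.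
Proof. apply shift_upd; lia. Qed.
Lemma shift_upd6 {M : Type} (E : nat -> M) a : shift10 (upd E 6 a) = shift10 E.
Proof. apply shift_upd; lia. Qed.

Definition PSI (chi : form) (i : nat) : form :=
  FAnd (FMem 1 2) (FOr (FAnd (FMem 0 4) (FAnd (Rf chi i 0 1)
          (FAll 5 (FImp (FMem 5 2) (FImp (Rf chi i 0 5) (FNot (APP 3 5 1)))))))
       (FAnd (FNot (FMem 0 4)) (FEq 1 0))).

Definition mkE {M : Type} (W r S : M) (e : nat -> M) : nat -> M := fun v =>
  match v with 2 => W | 3 => r | 4 => S | S (S (S (S (S (S (S (S (S (S k))))))))) => e k | _ => W end.

Lemma PSI_ok (M : structure) chi i (W r S : M) e a b :
  sat M (upd (upd (mkE W r S e) 0 a) 1 b) (PSI chi i) <->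
  smem M b W /\ ((smem M a S /\ RR M chi i e a b /\
       forall b', smem M b' W -> RR M chi i e a b' -> ~ app M r b' b) \/ (~ smem M a S /\ b = a)).
Proof.
  unfold PSI. cbn [sat].
  setoid_rewrite (Rf_ok M chi i 0 1 ltac:(lia) ltac:(lia)).
  setoid_rewrite (Rf_ok M chi i 0 5 ltac:(lia) ltac:(lia)).
  setoid_rewrite APP_ok.
  setoid_rewrite shift_upd5. setoid_rewrite shift_upd1. setoid_rewrite shift_upd0.
  replace (shift10 (mkE W r S e)) with e by reflexivity.
  cbn [upd Nat.eqb mkE]. tauto.
Qed.

Section Los.
Variable U : structure.
Hypothesis HZ : ZFCU_R U.
Variables F x : U.
Hypothesis HU : is_ultrafilter U F x.
Local Notation "a ∈ b" := (smem U a b) (at level 70).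
Local Notation A := (sur U).
Local Notation inF := (inF U F x).

Lemma uf_FnA : ~ A F. Proof. destruct HU as (?&?&?&?&?&?&?&?); eauto. Qed.
Lemma uf_xnA : ~ A x. Proof. destruct HU as (?&?&?&?&?&?&?&?); eauto. Qed.
Lemma uf_sub s : s ∈ F -> subset_of U s x. Proof. destruct HU as (?&?&?&?&?&?&?&?); eauto. Qed.
Lemma uf_x : x ∈ F. Proof. destruct HU as (?&?&?&?&?&?&?&?); eauto. Qed.
Lemma uf_ne s : s ∈ F -> exists z, z ∈ s. Proof. destruct HU as (?&?&?&?&?&?&?&?); eauto. Qed.
Lemma uf_int a b c : a ∈ F -> b ∈ F -> ~ A c -> (forall z, z ∈ c <-> (z ∈ a /\ z ∈ b)) -> c ∈ F.
Proof. destruct HU as (?&?&?&?&?&?&?&?); eauto. Qed.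
Lemma uf_up a b : a ∈ F -> subset_of U b x -> (forall z, z ∈ a -> z ∈ b) -> b ∈ F.
Proof. destruct HU as (?&?&?&?&?&?&?&?); eauto. Qed.
Lemma uf_ult s : subset_of U s x ->
     s ∈ F \/ (forall c, ~ A c -> (forall z, z ∈ c <-> (z ∈ x /\ ~ z ∈ s)) -> c ∈ F).
Proof. destruct HU as (?&?&?&?&?&?&?&?); eauto. Qed.

Definition V (f : nat -> U) (y : U) : nat -> U := fun k => fv U (f k) y.
Definition allfun (f : nat -> U) := forall k, fun_on U (f k) x.
Definition sepable (R : U -> Prop) := exists s, ~ A s /\ forall y, y ∈ s <-> (y ∈ x /\ R y).

Lemma inF_ext (P Q : U -> Prop) : (forall y, y ∈ x -> (P y <-> Q y)) -> inF P -> inF Q.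
Proof.
  intros H [s [Hs1 [Hs2 Hs3]]]. exists s; split; auto; split; auto. intro y. rewrite Hs3.
  split; intros [H1 H2]; split; auto; apply H; auto.
Qed.

Lemma inF_full (P : U -> Prop) : (forall y, y ∈ x -> P y) -> inF P.
Proof. intros H. exists x. split; [apply uf_x|split; [apply uf_xnA|]]. firstorder. Qed.

Lemma sepable_ext (P Q : U -> Prop) : (forall y, y ∈ x -> (P y <-> Q y)) -> sepable P -> sepable Q.
Proof.
  intros H [s [Hs1 Hs2]]. exists s; split; auto. intro y. rewrite Hs2. split; intros [H1 H2]; split; auto;
  apply H; auto.
Qed.

Lemma sepable_not (P : U -> Prop) : sepable P -> sepable (fun y => ~ P y).
Proof.
  intros [s [Hs1 Hs2]].
  destruct (zf_sep U HZ (FNot (FMem 0 1)) 0 (fun _ => s) x) as [c [Hc1 Hc2]].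
  exists c; split; auto. intro y. rewrite Hc2. cbn [sat]. unfold upd; eqbs. rewrite Hs2. tauto.
Qed.

Lemma sepable_and (P Q : U -> Prop) : sepable P -> sepable Q -> sepable (fun y => P y /\ Q y).
Proof.
  intros [s [Hs1 Hs2]] [t [Ht1 Ht2]].
  destruct (zf_sep U HZ (FMem 0 1) 0 (fun _ => t) s) as [c [Hc1 Hc2]].
  exists c; split; auto. intro y. rewrite Hc2. cbn [sat]. unfold upd; eqbs. rewrite Hs2, Ht2. tauto.
Qed.

Lemma sepable_or (P Q : U -> Prop) : sepable P -> sepable Q -> sepable (fun y => P y \/ Q y).
Proof.
  intros HP HQ. apply (sepable_ext (fun y => ~ (~ P y /\ ~ Q y))).
  - intros; tauto.
  - apply sepable_not, sepable_and; apply sepable_not; auto.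
Qed.

Lemma inF_set (P : U -> Prop) s : ~ A s -> (forall y, y ∈ s <-> (y ∈ x /\ P y)) -> (inF P <-> s ∈ F).
Proof.
  intros Hs1 Hs2. split.
  - intros [s' [H1 [H2 H3]]]. replace s with s'; auto. apply (zf_ext U HZ); auto.
    intro z. rewrite H3, Hs2. tauto.
  - intros H. exists s. auto.
Qed.

Lemma inF_mono2 (P Q R : U -> Prop) : inF P -> inF Q -> (forall y, y ∈ x -> P y -> Q y -> R y) ->
  sepable R -> inF R.
Proof.
  intros [s [Hs1 [Hs2 Hs3]]] [t [Ht1 [Ht2 Ht3]]] H [r [Hr1 Hr2]].
  destruct (zf_sep U HZ (FMem 0 1) 0 (fun _ => t) s) as [c [Hc1 Hc2]].
  assert (Hc : c ∈ F).
  { apply (uf_int s t c); auto; intro z; rewrite Hc2; cbn [sat]; unfold upd; eqbs; tauto. }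
  exists r. split; [|split; auto].
  - apply (uf_up c); auto.
    + split; auto. intros z Hz. apply Hr2 in Hz. tauto.
    + intros z Hz. apply Hc2 in Hz. cbn [sat] in Hz. revert Hz; unfold upd; eqbs. intros [H1 H2].
      apply Hs3 in H1. apply Ht3 in H2. apply Hr2. intuition.
Qed.

Lemma inF_mono (P R : U -> Prop) : inF P -> (forall y, y ∈ x -> P y -> R y) -> sepable R -> inF R.
Proof. intros H1 H2 H3. apply (inF_mono2 P P R); auto. Qed.

Lemma inF_nonempty (P : U -> Prop) : inF P -> exists y, y ∈ x /\ P y.
Proof.
  intros [s [Hs1 [Hs2 Hs3]]]. destruct (uf_ne s Hs1) as [z Hz]. exists z. apply Hs3; auto.
Qed.

Lemma inF_not (P : U -> Prop) : sepable P -> (inF (fun y => ~ P y) <-> ~ inF P).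
Proof.
  intros HP. split.
  - intros H1 H2. destruct (inF_nonempty (fun y => False)) as [y [_ []]].
    apply (inF_mono2 _ _ _ H1 H2). { intros; tauto. }
    destruct (ex_empty U HZ) as [z [Hz1 Hz2]]. exists z; split; auto. intro y. split; [intro H; exfalso; eapply Hz2; eauto|tauto].
  - intros H. destruct HP as [s [Hs1 Hs2]].
    destruct (sepable_not P (ex_intro _ s (conj Hs1 Hs2))) as [c [Hc1 Hc2]].
    assert (Hsub : subset_of U s x) by (split; auto; intros z Hz; apply Hs2; auto).
    destruct (uf_ult s Hsub) as [Hs|Hs].
    + exfalso. apply H. apply (inF_set P s); auto.
    + apply (inF_set _ c); auto. apply Hs; auto. intro z. rewrite Hc2, Hs2. tauto.
Qed.

Lemma inF_and (P Q : U -> Prop) : sepable P -> sepable Q -> (inF (fun y => P y /\ Q y) <-> inF P /\ inF Q).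
Proof.
  intros HP HQ. split.
  - intros H. split; (apply (inF_mono _ _ H); [intros; tauto|auto]).
  - intros [H1 H2]. apply (inF_mono2 _ _ _ H1 H2); auto. apply sepable_and; auto.
Qed.

Lemma inF_or (P Q : U -> Prop) : sepable P -> sepable Q -> (inF (fun y => P y \/ Q y) <-> inF P \/ inF Q).
Proof.
  intros HP HQ.
  assert (E : inF (fun y => P y \/ Q y) <-> inF (fun y => ~ (~ P y /\ ~ Q y))).
  { split; apply inF_ext; intros; tauto. }
  rewrite E, inF_not, inF_and, !inF_not; auto; try (apply sepable_not; auto).
  - tauto.
  - apply sepable_and; apply sepable_not; auto.
Qed.

Lemma inF_imp (P Q : U -> Prop) : sepable P -> sepable Q -> (inF (fun y => P y -> Q y) <-> (inF P -> inF Q)).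
Proof.
  intros HP HQ.
  assert (E : inF (fun y => P y -> Q y) <-> inF (fun y => ~ P y \/ Q y)).
  { split; apply inF_ext; intros; tauto. }
  rewrite E, inF_or, inF_not; auto; [tauto|apply sepable_not; auto].
Qed.

Lemma SEP (phi : form) (f : nat -> U) : allfun f -> sepable (fun y => sat U (V f y) phi).
Proof.
  intros Hf.
  destruct (zf_sep U HZ (TR (vb phi) (vb phi) phi) 1 (enc f) x) as [s [Hs1 Hs2]].
  exists s; split; auto. intro y. rewrite Hs2. split; intros [Hy H]; split; auto.
  - rewrite TR_ok in H. destruct H as [c [H1 H2]]. revert H2. apply sat_ext. intros k Hk.
    destruct (Nat.ltb_spec k (vb phi)); [|lia]. destruct (Nat.eqb_spec k (vb phi)); [lia|]. simpl.
    specialize (H1 k Hk ltac:(lia)). rewrite upd_neq in H1 by lia. rewrite upd_eq in H1.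
    rewrite enc_spec in H1. unfold V. symmetry. apply (fv_app U (f k) x); auto.
  - rewrite TR_ok. exists (V f y). split.
    + intros k Hk _. rewrite upd_neq by lia. rewrite upd_eq, enc_spec. apply (fv_app U (f k) x); auto.
    + revert H. apply sat_ext. intros k Hk.
      destruct (Nat.ltb_spec k (vb phi)); [|lia]. destruct (Nat.eqb_spec k (vb phi)); [lia|]. reflexivity.
Qed.

Lemma TR2_ok (q : form) (i : nat) (f : nat -> U) a b : allfun f -> a ∈ x ->
  (sat U (upd (upd (enc f) 1 a) (3 * i) b) (TR (max (vb q) (S i)) i q) <-> sat U (upd (V f a) i b) q).
Proof.
  intros Hf Ha. rewrite TR_ok. split.
  - intros [c [H1 H2]]. revert H2. apply sat_ext. intros k Hk. unfold upd at 2.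
    destruct (Nat.eqb_spec k i).
    + subst. rewrite Nat.eqb_refl. simpl. destruct (Nat.ltb_spec i (max (vb q) (S i))); [|lia].
      simpl. rewrite upd_eq. auto.
    + destruct (Nat.ltb_spec k (max (vb q) (S i))); [|lia]. destruct (Nat.eqb_spec k i); [lia|]. simpl.
      specialize (H1 k ltac:(lia) n). rewrite (upd_neq _ (3*i)) in H1 by lia.
      rewrite (upd_neq _ (3*i)) in H1 by lia. rewrite upd_neq in H1 by lia. rewrite upd_eq in H1.
      rewrite enc_spec in H1. unfold V. rewrite upd_neq by auto. symmetry. apply (fv_app U (f k) x); auto.
  - intros H. exists (V f a). split.
    + intros k Hk Hk'. rewrite !(upd_neq _ (3*i)) by lia. rewrite upd_neq by lia. rewrite upd_eq, enc_spec.
      apply (fv_app U (f k) x); auto.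
    + revert H. apply sat_ext. intros k Hk. unfold upd at 1.
      destruct (Nat.eqb_spec k i).
      * subst. destruct (Nat.ltb_spec i (max (vb q) (S i))); [|lia]. simpl. rewrite Nat.eqb_refl, upd_eq. reflexivity.
      * destruct (Nat.ltb_spec k (max (vb q) (S i))); [|lia]. destruct (Nat.eqb_spec k i); [lia|]. simpl. rewrite upd_neq by auto. reflexivity.
Qed.

Definition two (f g : U) : nat -> U := fun k => match k with 0 => f | _ => g end.
Lemma allfun_two f g : fun_on U f x -> fun_on U g x -> allfun (two f g).
Proof. intros Hf Hg k. destruct k; simpl; auto. Qed.

Lemma sep_eq f g : fun_on U f x -> fun_on U g x -> sepable (fun y => fv U f y = fv U g y).
Proof. intros Hf Hg. exact (SEP (FEq 0 1) (two f g) (allfun_two f g Hf Hg)). Qed.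

Lemma eqF_iff f g : fun_on U f x -> fun_on U g x -> (eqF U F x f g <-> inF (fun y => fv U f y = fv U g y)).
Proof.
  intros Hf Hg. unfold eqF. split; apply inF_ext; intros y Hy; split;
  first [ (intros [v [H1 H2]]; apply (fv_app U f x) in H1; auto; apply (fv_app U g x) in H2; auto; congruence)
        | (intros H; exists (fv U f y); split; [apply (fv_app U f x)|apply (fv_app U g x)]; auto) ].
Qed.

Lemma eqfv_trans f g h : fun_on U f x -> fun_on U g x -> fun_on U h x ->
  inF (fun y => fv U f y = fv U g y) -> inF (fun y => fv U g y = fv U h y) -> inF (fun y => fv U f y = fv U h y).
Proof. intros Hf Hg Hh H1 H2. apply (inF_mono2 _ _ _ H1 H2); [intros; congruence|apply sep_eq; auto]. Qed.
Lemma eqfv_sym f g : fun_on U f x -> fun_on U g x ->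
  inF (fun y => fv U f y = fv U g y) -> inF (fun y => fv U g y = fv U f y).
Proof. intros Hf Hg H1. apply (inF_mono _ _ H1); [intros; congruence|apply sep_eq; auto]. Qed.
Lemma eqfv_refl f : inF (fun y => fv U f y = fv U f y).
Proof. apply inF_full. auto. Qed.

Local Notation ucl := (uclass U F x).

Lemma cls_fun (C : ucl) g : proj1_sig C g -> fun_on U g x.
Proof. destruct C as [C [r [Hr ->]]]. simpl. intros [H _]. auto. Qed.

Lemma cls_mem (C : ucl) g h : proj1_sig C g -> proj1_sig C h -> inF (fun y => fv U g y = fv U h y).
Proof.
  destruct C as [C [r [Hr ->]]]. simpl. intros [Hg H1] [Hh H2].
  rewrite eqF_iff in H1, H2 by auto. apply (eqfv_trans g r h); auto. apply eqfv_sym; auto.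
Qed.

Lemma cls_in (C : ucl) g h : proj1_sig C g -> fun_on U h x -> inF (fun y => fv U g y = fv U h y) -> proj1_sig C h.
Proof.
  destruct C as [C [r [Hr ->]]]. simpl. intros [Hg H1] Hh H2. split; auto.
  rewrite eqF_iff in H1 |- * by auto. apply (eqfv_trans r g h); auto.
Qed.

Lemma cls_rep (C : ucl) : exists r, proj1_sig C r.
Proof.
  destruct C as [C [r [Hr ->]]]. exists r. simpl. split; auto. rewrite eqF_iff by auto. apply eqfv_refl.
Qed.

Lemma cls_eq (C D : ucl) g h : proj1_sig C g -> proj1_sig D h ->
  (C = D <-> inF (fun y => fv U g y = fv U h y)).
Proof.
  intros Hg Hh. split.
  - intros ->. apply (cls_mem D); auto.
  - intros H.
    assert (E : proj1_sig C = proj1_sig D).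
    { pose proof (cls_fun C g Hg) as Fg. pose proof (cls_fun D h Hh) as Fh.
      apply functional_extensionality. intro z. apply propositional_extensionality. split; intros Hz.
      - pose proof (cls_fun C z Hz) as Fz.
        apply (cls_in D h z); auto.
        apply (eqfv_trans h g z); auto.
        + apply eqfv_sym; auto.
        + apply (cls_mem C); auto.
      - pose proof (cls_fun D z Hz) as Fz.
        apply (cls_in C g z); auto.
        apply (eqfv_trans g h z); auto.
        apply (cls_mem D); auto. }
    destruct C as [C HC]; destruct D as [D HD]. simpl in E. subst D. f_equal. apply proof_irrelevance.
Qed.

Definition mkcls (g : U) (Hg : fun_on U g x) : ucl :=
  exist _ (ucls U F x g) (ex_intro _ g (conj Hg eq_refl)).
Lemma mkcls_in g Hg : proj1_sig (mkcls g Hg) g.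
Proof. simpl. split; auto. rewrite eqF_iff by auto. apply eqfv_refl. Qed.

Lemma Vupd f n g y k : V (upd f n g) y k = upd (V f y) n (fv U g y) k.
Proof. unfold V, upd. destruct (Nat.eqb k n); auto. Qed.

Lemma allfun_upd f n g : allfun f -> fun_on U g x -> allfun (upd f n g).
Proof. intros Hf Hg k. unfold upd. destruct (Nat.eqb k n); auto. Qed.

Lemma sep_upd phi f n g : allfun f -> fun_on U g x ->
  sepable (fun y => sat U (upd (V f y) n (fv U g y)) phi).
Proof.
  intros Hf Hg. apply (sepable_ext (fun y => sat U (V (upd f n g) y) phi)).
  - intros y Hy. apply sat_ext_all. apply Vupd.
  - apply SEP, allfun_upd; auto.
Qed.

Lemma WIT (HC : Collection U) q i f : allfun f ->
  inF (fun y => exists b, sat U (upd (V f y) i b) q) ->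
  exists g, fun_on U g x /\ inF (fun y => sat U (upd (V f y) i (fv U g y)) q).
Proof.
  intros Hf [S [HSF [HSA HS]]].
  assert (HR : forall a b, a ∈ x ->
    (RR U (TR (max (vb q) (Datatypes.S i)) i q) i (enc f) a b <-> sat U (upd (V f a) i b) q)).
  { intros a b Ha. unfold RR. apply TR2_ok; auto. }
  set (chi := TR (max (vb q) (Datatypes.S i)) i q) in *.
  destruct (HC chi 1 (3 * i) (enc f) S) as [v Hv].
  { intros a Ha. apply HS in Ha. destruct Ha as [Hax [b Hb]]. exists b. apply HR; auto. }
  destruct (ex_union2 U HZ v x) as [W [HWA HW]].
  destruct (zf_choice U HZ W HWA) as [r [HrA Hwo]]. unfold well_orders in Hwo. cbv zeta in Hwo.
  destruct Hwo as [Hirr [Htr [Htri Hmin]]].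
  set (E := mkE W r S (enc f)).
  assert (P1 : forall a, a ∈ x -> exists b, sat U (upd (upd E 0 a) 1 b) (PSI chi i) /\
                  forall b', sat U (upd (upd E 0 a) 1 b') (PSI chi i) -> b' = b).
  { intros a Ha. unfold E. setoid_rewrite PSI_ok.
    destruct (classic (a ∈ S)) as [HaS|HaS].
    - destruct (Hv a HaS) as [b0 [Hb0v Hb0]].
      destruct (zf_sep U HZ (Rf chi i 6 0) 0 (upd E 6 a) W) as [Wa [HWaA HWa0]].
      assert (HWa : forall z, z ∈ Wa <-> z ∈ W /\ RR U chi i (enc f) a z).
      { intro z. rewrite HWa0. rewrite Rf_ok by lia. rewrite shift_upd0, shift_upd6.
        rewrite upd_eq. rewrite upd_neq by lia. rewrite upd_eq. reflexivity. }
      destruct (Hmin Wa) as [m [Hm Hmm]].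
      { split; auto. intros z Hz. apply HWa in Hz. tauto. }
      { exists b0. apply HWa. split; [apply HW; auto|exact Hb0]. }
      apply HWa in Hm. destruct Hm as [HmW HmR].
      exists m. split.
      + split; auto. left. split; auto. split; auto. intros b' Hb'W Hb'R. apply Hmm. apply HWa. auto.
      + intros b' [Hb'W [[_ [Hb'R Hb'm]]|[Hn _]]]; [|contradiction].
        destruct (Htri m b' HmW Hb'W) as [->|[Hlt|Hlt]]; auto.
        * exfalso. apply (Hb'm m HmW HmR Hlt).
        * exfalso. apply (Hmm b'); auto. apply HWa. auto.
    - exists a. split.
      + split; [apply HW; auto|]. right. auto.
      + intros b' [_ [[H _]|[_ H]]]; [contradiction|auto]. }
  assert (P2 : forall a b, a ∈ x -> sat U (upd (upd E 0 a) 1 b) (PSI chi i) -> b ∈ W).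
  { intros a b Ha H. unfold E in H. rewrite PSI_ok in H. tauto. }
  destruct (build_fun U HZ x W (PSI chi i) E P1 P2) as [g [Hg Hgapp]].
  exists g. split; auto.
  apply (inF_mono (fun y => exists b, sat U (upd (V f y) i b) q)).
  - exists S. auto.
  - intros y Hy Hb. assert (HyS : y ∈ S) by (apply HS; auto).
    destruct (fv_spec U g x y Hg Hy) as [Happ _].
    apply Hgapp in Happ; auto. unfold E in Happ. rewrite PSI_ok in Happ.
    destruct Happ as [_ [[_ [H _]]|[H _]]]; [|contradiction].
    apply HR; auto.
  - apply sep_upd; auto.
Qed.

Lemma rho_upd (rho : nat -> uclass U F x) f n (C : uclass U F x) g :
  (forall k, proj1_sig (rho k) (f k)) -> proj1_sig C g ->
  forall k, proj1_sig (upd rho n C k) (upd f n g k).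
Proof. intros H1 H2 k. unfold upd. destruct (Nat.eqb k n); auto. Qed.

Lemma LOS (HC : Collection U) (phi : form) : forall (rho : nat -> uclass U F x) (f : nat -> U),
  (forall k, proj1_sig (rho k) (f k)) ->
  (sat (ultrapower U F x) rho phi <-> inF (fun y => sat U (V f y) phi)).
Proof.
  induction phi; intros rho f Hrf;
    assert (Hf : allfun f) by (intro k; apply (cls_fun (rho k)); auto); cbn [sat].
  -
    change (umem U F x (rho n) (rho n0) <-> inF (fun y => fv U (f n) y ∈ fv U (f n0) y)).
    split.
    + intros [g [h [Hg [Hh H]]]].
      pose proof (cls_fun _ _ Hg) as Fg. pose proof (cls_fun _ _ Hh) as Fh.
      pose proof (cls_mem (rho n) g (f n) Hg (Hrf n)) as E1.
      pose proof (cls_mem (rho n0) h (f n0) Hh (Hrf n0)) as E2.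
      assert (E3 : inF (fun y => fv U g y ∈ fv U h y)).
      { refine (inF_ext _ _ _ H). intros y Hy. split.
        - intros [a [b [Ha [Hb Hab]]]]. apply (fv_app U g x) in Ha; auto.
          apply (fv_app U h x) in Hb; auto. congruence.
        - intros H'. exists (fv U g y), (fv U h y). split; [|split]; auto;
          [apply (fv_app U g x)|apply (fv_app U h x)]; auto. }
      assert (E12 : inF (fun y => fv U g y = fv U (f n) y /\ fv U h y = fv U (f n0) y)).
      { apply (inF_mono2 _ _ _ E1 E2); auto. apply sepable_and; apply sep_eq; auto. }
      apply (inF_mono2 _ _ _ E12 E3).
      * intros y Hy [-> ->]; auto.
      * exact (SEP (FMem n n0) f Hf).
    + intros H. exists (f n), (f n0). split; [auto|split; [auto|]].
      refine (inF_ext _ _ _ H). intros y Hy. split.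
      * intros H'. exists (fv U (f n) y), (fv U (f n0) y). split; [|split]; auto;
          [apply (fv_app U (f n) x)|apply (fv_app U (f n0) x)]; auto.
      * intros [a [b [Ha [Hb Hab]]]]. apply (fv_app U (f n) x) in Ha; auto.
          apply (fv_app U (f n0) x) in Hb; auto. congruence.
  -
    apply cls_eq; auto.
  -
    change (uur U F x (rho n) <-> inF (fun y => A (fv U (f n) y))). split.
    + intros [g [Hg H]]. pose proof (cls_fun _ _ Hg) as Fg.
      pose proof (cls_mem (rho n) g (f n) Hg (Hrf n)) as E1.
      apply (inF_mono2 _ _ _ E1 H).
      * intros y Hy He [a [Ha HA]]. apply (fv_app U g x) in Ha; auto. congruence.
      * exact (SEP (FUr n) f Hf).
    + intros H. exists (f n). split; auto. refine (inF_ext _ _ _ H). intros y Hy. split.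
      * intros H'. exists (fv U (f n) y). split; auto. apply (fv_app U (f n) x); auto.
      * intros [a [Ha HA]]. apply (fv_app U (f n) x) in Ha; auto. congruence.
  -
    split; [tauto|]. intros H. destruct (inF_nonempty _ H) as [y [_ []]].
  -
    rewrite (IHphi rho f Hrf). rewrite inF_not; [tauto|]. apply SEP; auto.
  - rewrite (IHphi1 rho f Hrf), (IHphi2 rho f Hrf). rewrite inF_and; [tauto| |]; apply SEP; auto.
  - rewrite (IHphi1 rho f Hrf), (IHphi2 rho f Hrf). rewrite inF_or; [tauto| |]; apply SEP; auto.
  - rewrite (IHphi1 rho f Hrf), (IHphi2 rho f Hrf). rewrite inF_imp; [tauto| |]; apply SEP; auto.
  -
    assert (KEY : forall C g, proj1_sig C g ->
      (sat (ultrapower U F x) (upd rho n C) phi <-> inF (fun y => sat U (upd (V f y) n (fv U g y)) phi))).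
    { intros C g Hg. rewrite (IHphi (upd rho n C) (upd f n g) (rho_upd rho f n C g Hrf Hg)).
      split; apply inF_ext; intros y Hy; apply sat_ext_all; intro k; rewrite Vupd; auto. }
    split.
    + intros H. apply NNPP. intro Hn.
      rewrite <- inF_not in Hn by (exact (SEP (FAll n phi) f Hf)).
      assert (Hn' : inF (fun y => exists b, sat U (upd (V f y) n b) (FNot phi))).
      { refine (inF_ext _ _ _ Hn). intros y Hy. cbn [sat]. split.
        - intros H1. apply not_all_ex_not in H1. exact H1.
        - intros [b Hb] H1. apply Hb, H1. }
      destruct (WIT HC (FNot phi) n f Hf Hn') as [g [Hg Hin]].
      pose proof (H (mkcls g Hg)) as H2. rewrite (KEY _ g (mkcls_in g Hg)) in H2.
      cbn [sat] in Hin. rewrite inF_not in Hin; [contradiction|]. apply sep_upd; auto.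
    + intros H C. destruct (cls_rep C) as [g Hg]. rewrite (KEY C g Hg).
      apply (inF_mono _ _ H).
      * intros y Hy H1. apply H1.
      * apply sep_upd; auto. apply (cls_fun C); auto.
  -
    assert (KEY : forall C g, proj1_sig C g ->
      (sat (ultrapower U F x) (upd rho n C) phi <-> inF (fun y => sat U (upd (V f y) n (fv U g y)) phi))).
    { intros C g Hg. rewrite (IHphi (upd rho n C) (upd f n g) (rho_upd rho f n C g Hrf Hg)).
      split; apply inF_ext; intros y Hy; apply sat_ext_all; intro k; rewrite Vupd; auto. }
    split.
    + intros [C H]. destruct (cls_rep C) as [g Hg]. rewrite (KEY C g Hg) in H.
      apply (inF_mono _ _ H).
      * intros y Hy H1. eauto.
      * exact (SEP (FEx n phi) f Hf).
    + intros H. destruct (WIT HC phi n f Hf H) as [g [Hg Hin]].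
      exists (mkcls g Hg). rewrite (KEY _ g (mkcls_in g Hg)). auto.
Qed.

Lemma LOS_full (HC : Collection U) : Los U F x.
Proof.
  intros phi rho f Hrf. rewrite (LOS HC phi rho f Hrf).
  assert (Hf : allfun f) by (intro k; apply (cls_fun (rho k)); auto).
  split; apply inF_ext; intros y Hy; split.
  - intros H. exists (V f y). split; auto. intro k. apply (fv_app U (f k) x); auto.
  - intros [g [Hg H]]. revert H. apply sat_ext_all. intro k. unfold V.
    first [apply (fv_app U (f k) x); auto | symmetry; apply (fv_app U (f k) x); auto].
  - intros [g [Hg H]]. revert H. apply sat_ext_all. intro k. unfold V.
    first [apply (fv_app U (f k) x); auto | symmetry; apply (fv_app U (f k) x); auto].
  - intros H. exists (V f y). split; auto. intro k. apply (fv_app U (f k) x); auto.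
Qed.

End Los.


Definition ATT (ag ad : nat) : form :=
  FAnd (FAll 20 (FImp (FMem 20 ad) (FMem 20 2)))
  (FAnd (FAll 20 (FImp (FMem 20 ad) (FOr (FEq 20 ag) (APP 1 20 ag))))
  (FAll 20 (FImp (FMem 20 2) (FImp (FOr (FEq 20 ag) (APP 1 20 ag))
     (FIff (FMem 20 ad) (FAll 21 (FImp (FMem 21 ad) (FImp (APP 1 21 20)
        (FAll 22 (FImp (FMem 22 21) (FMem 22 20))))))))))).

Section Zorn.
Variable U : structure.
Hypothesis HZ : ZFCU_R U.
Local Notation "a ∈ b" := (smem U a b) (at level 70).
Local Notation A := (sur U).
Variables FS r : U.
Hypothesis HFS : ~ A FS.
Hypothesis Hwo : well_orders U r FS.

Local Notation lt := (app U r).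
Definition le a b := a = b \/ lt a b.

Definition att (G D : U) : Prop :=
  (forall H, H ∈ D -> H ∈ FS) /\ (forall H, H ∈ D -> le H G) /\
  (forall H, H ∈ FS -> le H G -> (H ∈ D <-> forall H', H' ∈ D -> lt H' H -> forall z, z ∈ H' -> z ∈ H)).

Lemma ATT_ok ag ad (E : nat -> U) : ag <> 20 -> ag <> 21 -> ag <> 22 -> ad <> 20 -> ad <> 21 -> ad <> 22 ->
  ag <> 1 -> ad <> 1 -> ag <> 2 -> ad <> 2 -> E 1 = r -> E 2 = FS ->
  (sat U E (ATT ag ad) <-> att (E ag) (E ad)).
Proof.
  intros. unfold ATT, FIff, att, le. cbn [sat]. setoid_rewrite APP_ok. unfold upd; eqbs.
  rewrite H9, H10. firstorder.
Qed.

Definition mkZ (a b c : U) : nat -> U := fun v => match v with 1 => r | 2 => FS | 5 => a | 6 => b | 7 => c | _ => FS end.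

Lemma irr a : a ∈ FS -> ~ lt a a. Proof. intros. apply Hwo; auto. Qed.
Lemma trans a b c : a ∈ FS -> b ∈ FS -> c ∈ FS -> lt a b -> lt b c -> lt a c.
Proof. intros. destruct Hwo as [_ [Htr _]]. apply (Htr a b c); auto. Qed.
Lemma tri a b : a ∈ FS -> b ∈ FS -> a = b \/ lt a b \/ lt b a.
Proof. intros. destruct Hwo as [_ [_ [Htri _]]]. eapply Htri; eauto. Qed.
Lemma wmin s : subset_of U s FS -> (exists z, z ∈ s) -> exists m, m ∈ s /\ forall z, z ∈ s -> ~ lt z m.
Proof. intros. destruct Hwo as [_ [_ [_ Hm]]]. eapply Hm; eauto. Qed.

Lemma le_lt_trans a b c : a ∈ FS -> b ∈ FS -> c ∈ FS -> lt a b -> le b c -> lt a c.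
Proof. intros ? ? ? H1 [<-|H2]; auto. apply (trans a b c); auto. Qed.

Lemma coherence G1 D1 G2 D2 : G1 ∈ FS -> G2 ∈ FS -> att G1 D1 -> att G2 D2 ->
  forall H, H ∈ FS -> le H G1 -> le H G2 -> (H ∈ D1 <-> H ∈ D2).
Proof.
  intros HG1 HG2 [A1 [B1 C1]] [A2 [B2 C2]].
  apply NNPP. intro Hn. apply not_all_ex_not in Hn. destruct Hn as [H0 Hn].
  destruct (zf_sep U HZ
    (FAnd (FOr (FEq 3 5) (APP 1 3 5)) (FAnd (FOr (FEq 3 6) (APP 1 3 6)) (FNot (FIff (FMem 3 7) (FMem 3 8)))))
    3 (fun v => match v with 1 => r | 2 => FS | 5 => G1 | 6 => G2 | 7 => D1 | 8 => D2 | _ => FS end) FS)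
    as [Dis [HDisA HDis0]].
  assert (HDis : forall z, z ∈ Dis <-> z ∈ FS /\ le z G1 /\ le z G2 /\ ~ (z ∈ D1 <-> z ∈ D2)).
  { intro z. rewrite HDis0. unfold FIff, le. cbn [sat]. setoid_rewrite APP_ok. unfold upd; eqbs. tauto. }
  destruct (wmin Dis) as [m [Hm Hmin]].
  - split; auto. intros z Hz. apply HDis in Hz. tauto.
  - exists H0. apply HDis. tauto.
  - apply HDis in Hm. destruct Hm as [HmF [Hm1 [Hm2 Hm3]]]. apply Hm3.
    rewrite (C1 m HmF Hm1), (C2 m HmF Hm2).
    assert (K : forall H', lt H' m -> (H' ∈ D1 <-> H' ∈ D2)).
    { intros H' Hlt. apply NNPP. intro Hn'.
      assert (HF : H' ∈ FS) by (destruct (classic (H' ∈ D1)); [apply A1; auto|apply A2; tauto]).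
      apply (Hmin H'); auto. apply HDis. split; auto. split; [|split; auto].
      - right. apply (le_lt_trans H' m G1); auto.
      - right. apply (le_lt_trans H' m G2); auto. }
    split; intros HH H' HH' Hlt; apply HH; auto; apply K; auto.
Qed.

Lemma att_exists G : G ∈ FS -> exists D, att G D.
Proof.
  intros HG. apply NNPP. intro Hn.
  destruct (zf_sep U HZ (FNot (FEx 4 (ATT 3 4))) 3 (mkZ FS FS FS) FS) as [NA [HNAA HNA0]].
  assert (HNA : forall z, z ∈ NA <-> z ∈ FS /\ ~ exists D, att z D).
  { intro z. rewrite HNA0. cbn [sat]. setoid_rewrite ATT_ok; try lia; try reflexivity;
    try (unfold upd; eqbs; tauto). }
  destruct (wmin NA) as [G0 [HG0 Hmin]].
  - split; auto. intros z Hz. apply HNA in Hz. tauto.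
  - exists G. apply HNA. auto.
  - apply HNA in HG0. destruct HG0 as [HG0F HG0n]. apply HG0n.
    assert (Hbelow : forall H, H ∈ FS -> lt H G0 -> exists D, att H D).
    { intros H HF Hlt. apply NNPP. intro Hn'. apply (Hmin H); auto. apply HNA. auto. }
    destruct (zf_sep U HZ (FAnd (APP 1 3 5) (FEx 4 (FAnd (ATT 3 4) (FMem 3 4)))) 3 (mkZ G0 FS FS) FS)
      as [D0 [HD0A HD00]].
    assert (HD0 : forall z, z ∈ D0 <-> z ∈ FS /\ lt z G0 /\ exists D, att z D /\ z ∈ D).
    { intro z. rewrite HD00. cbn [sat]. setoid_rewrite APP_ok. setoid_rewrite ATT_ok; try lia; try reflexivity;
      try (unfold upd; eqbs; reflexivity). }
    assert (K : forall H D, H ∈ FS -> lt H G0 -> att H D -> forall H', H' ∈ FS -> le H' H -> (H' ∈ D0 <-> H' ∈ D)).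
    { intros H D HF Hlt Ha H' HF' Hle.
      assert (Hlt' : lt H' G0) by (destruct Hle as [->|Hle]; auto; apply (trans H' H G0); auto).
      rewrite HD0. split.
      - intros [_ [_ [D' [Ha' Hin]]]]. rewrite <- (coherence H' D' H D); auto. left; auto.
      - intros Hin. split; auto. split; auto. destruct (Hbelow H' HF' Hlt') as [D' Ha'].
        exists D'. split; auto. rewrite (coherence H' D' H D); auto. left; auto. }
    set (cond := forall H', H' ∈ D0 -> lt H' G0 -> forall z, z ∈ H' -> z ∈ G0).
    assert (HD0F : forall z, z ∈ D0 -> z ∈ FS) by (intros z Hz; apply HD0 in Hz; tauto).
    assert (HD0lt : forall z, z ∈ D0 -> lt z G0) by (intros z Hz; apply HD0 in Hz; tauto).
    assert (HG0nD0 : ~ G0 ∈ D0) by (intro H; apply (irr G0); auto).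
    destruct (classic cond) as [Hc|Hc].
    + destruct (zf_sep U HZ (FOr (FMem 3 5) (FEq 3 6)) 3 (mkZ D0 G0 FS) FS) as [D [HDA HD1]].
      assert (HD : forall z, z ∈ D <-> z ∈ D0 \/ z = G0).
      { intro z. rewrite HD1. cbn [sat]. unfold upd; eqbs. cbn. split; [tauto|].
        intros [H|H]; split; auto; subst; auto. }
      exists D. split; [|split].
      * intros H HH. apply HD in HH. destruct HH as [HH| ->]; auto.
      * intros H HH. apply HD in HH. destruct HH as [HH| ->]; [right|left]; auto.
      * intros H HF [->|Hlt].
        -- split.
           ++ intros _ H' HH' Hlt. apply HD in HH'. destruct HH' as [HH'| ->].
              ** apply Hc; auto.
              ** exfalso. apply (irr G0); auto.
           ++ intros _. apply HD. auto.
        -- rewrite HD. destruct (Hbelow H HF Hlt) as [DH HaH].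
           assert (E1 : H ∈ D0 <-> H ∈ DH) by (apply (K H DH); auto; left; auto).
           assert (HH : H ∈ D0 \/ H = G0 <-> H ∈ D0) by (split; [intros [?| ->]; auto; exfalso; apply (irr G0); auto|auto]).
           rewrite HH, E1. pose proof HaH as [HA1 [HA2 HA3]]. rewrite (HA3 H HF (or_introl eq_refl)).
           split; intros HH' H' HH'' Hlt'.
           ++ apply HH'; auto. apply HD in HH''. destruct HH'' as [HH''| ->].
              ** assert (HF' : H' ∈ FS) by auto. assert (Hle : le H' H) by (right; auto).
                 apply (K H DH HF Hlt HaH H' HF' Hle); auto.
              ** exfalso. apply (irr G0); auto. apply (trans G0 H G0); auto.
           ++ apply HH'; auto. apply HD. left.
              assert (HF' : H' ∈ FS) by auto. assert (Hle : le H' H) by (right; auto).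
              apply (K H DH HF Hlt HaH H' HF' Hle); auto.
    + exists D0. split; [|split].
      * auto.
      * intros H HH. right. auto.
      * intros H HF [->|Hlt].
        -- split; [intros HH; contradiction|intros HH; exfalso; apply Hc; exact HH].
        -- destruct (Hbelow H HF Hlt) as [DH HaH].
           rewrite (K H DH HF Hlt HaH H HF (or_introl eq_refl)).
           pose proof HaH as [HA1 [HA2 HA3]]. rewrite (HA3 H HF (or_introl eq_refl)).
           split; intros HH' H' HH'' Hlt'; apply HH'; auto.
           ++ assert (HF' : H' ∈ FS) by auto. assert (Hle : le H' H) by (right; auto).
              apply (K H DH HF Hlt HaH H' HF' Hle); auto.
           ++ assert (HF' : H' ∈ FS) by auto. assert (Hle : le H' H) by (right; auto).
              apply (K H DH HF Hlt HaH H' HF' Hle); auto.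
Qed.

Lemma Ch_exists : exists Ch, ~ A Ch /\ forall G, G ∈ Ch <->
   (G ∈ FS /\ forall H, H ∈ Ch -> lt H G -> forall z, z ∈ H -> z ∈ G).
Proof.
  destruct (zf_sep U HZ (FEx 4 (FAnd (ATT 3 4) (FMem 3 4))) 3 (mkZ FS FS FS) FS) as [Ch [HChA HCh0]].
  assert (HCh : forall z, z ∈ Ch <-> z ∈ FS /\ exists D, att z D /\ z ∈ D).
  { intro z. rewrite HCh0. cbn [sat]. setoid_rewrite ATT_ok; try lia; try reflexivity;
    try (unfold upd; eqbs; reflexivity). }
  exists Ch. split; auto. intro G.
  assert (Kin : forall H D, H ∈ FS -> att H D -> (H ∈ Ch <-> H ∈ D)).
  { intros H D HF Ha. rewrite HCh. split.
    - intros [_ [D' [Ha' Hin]]]. rewrite <- (coherence H D' H D); auto; left; auto.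
    - intros Hin. split; auto. exists D; auto. }
  split.
  - intros HG. assert (HF : G ∈ FS) by (apply HCh in HG; tauto). split; auto.
    destruct (att_exists G HF) as [D Ha].
    pose proof Ha as [HA1 [HA2 HA3]].
    rewrite (Kin G D HF Ha) in HG. rewrite (HA3 G HF (or_introl eq_refl)) in HG.
    intros H HH Hlt. assert (HHF : H ∈ FS) by (apply HCh in HH; tauto).
    apply HG; auto. destruct (att_exists H HHF) as [DH HaH].
    rewrite (Kin H DH HHF HaH) in HH. rewrite <- (coherence H DH G D); auto; try (left; reflexivity); try (right; assumption).
  - intros [HF HG]. destruct (att_exists G HF) as [D Ha]. pose proof Ha as [HA1 [HA2 HA3]].
    apply (Kin G D HF Ha). apply (HA3 G HF (or_introl eq_refl)).
    intros H HH Hlt. apply HG; auto. assert (HHF : H ∈ FS) by auto.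
    destruct (att_exists H HHF) as [DH HaH].
    rewrite (Kin H DH HHF HaH). rewrite (coherence H DH G D); auto; try (left; reflexivity); try (right; assumption).
Qed.

Lemma zorn_chain : (exists G0, G0 ∈ FS) -> exists Ch, ~ A Ch /\ (forall G, G ∈ Ch -> G ∈ FS) /\
   (exists G, G ∈ Ch) /\
   (forall G1 G2, G1 ∈ Ch -> G2 ∈ Ch -> (forall z, z ∈ G1 -> z ∈ G2) \/ (forall z, z ∈ G2 -> z ∈ G1)) /\
   (forall G, G ∈ FS -> (forall H, H ∈ Ch -> forall z, z ∈ H -> z ∈ G) -> G ∈ Ch).
Proof.
  intros [G0 HG0]. destruct Ch_exists as [Ch [HChA HCh]].
  exists Ch. split; auto. split; [intros G HG; apply HCh in HG; tauto|]. split; [|split].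
  - destruct (wmin FS (conj HFS (fun z Hz => Hz)) (ex_intro _ G0 HG0)) as [m [Hm Hmin]].
    + exists m. apply HCh. split; auto. intros H HH Hlt. exfalso. apply (Hmin H); auto.
      apply HCh in HH; tauto.
  - intros G1 G2 H1 H2. pose proof H1 as H1'. pose proof H2 as H2'.
    apply HCh in H1'. apply HCh in H2'.
    destruct (tri G1 G2 (proj1 H1') (proj1 H2')) as [->|[Hlt|Hlt]]; try tauto.
    + left. apply (proj2 H2'); auto.
    + right. apply (proj2 H1'); auto.
  - intros G HF HG. apply HCh. split; auto. intros H HH _. apply HG; auto.
Qed.

End Zorn.


Definition shift30 {M : Type} (E : nat -> M) : nat -> M := fun k => E (30 + k).
Definition QQ (M : structure) (phi : form) (i j : nat) (E : nat -> M) (a b : M) : Prop :=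
  sat M (upd (upd E i a) j b) phi.
Definition QF (phi : form) (i j ya yb : nat) : form :=
  FEx (30 + i) (FAnd (FEq (30 + i) ya) (FEx (30 + j) (FAnd (FEq (30 + j) yb) (ren (fun k => 30 + k) phi)))).

Lemma QF_ok (M : structure) phi i j ya yb : ya < 30 -> yb < 30 -> forall E : nat -> M,
  sat M E (QF phi i j ya yb) <-> QQ M phi i j (shift30 E) (E ya) (E yb).
Proof.
  intros Ha Hb E. unfold QF, QQ. cbn [sat].
  split.
  - intros [a [H1 [b [H2 H]]]]. rewrite (sat_ren M (fun k => 30 + k)) in H by (intros; lia).
    rewrite upd_eq, upd_neq in H1 by lia. rewrite upd_eq in H2. rewrite !upd_neq in H2 by lia.
    subst. revert H. apply sat_ext_all. intro k. unfold upd, shift30.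
    destruct (Nat.eqb_spec (30 + k) (30 + j)); destruct (Nat.eqb_spec k j); try lia; auto;
    destruct (Nat.eqb_spec (30 + k) (30 + i)); destruct (Nat.eqb_spec k i); try lia; auto.
  - intros H. exists (E ya). split. { rewrite upd_eq, upd_neq by lia. auto. }
    exists (E yb). split. { rewrite upd_eq. rewrite !upd_neq by lia. auto. }
    rewrite (sat_ren M (fun k => 30 + k)) by (intros; lia).
    revert H. apply sat_ext_all. intro k. unfold upd, shift30.
    destruct (Nat.eqb_spec (30 + k) (30 + j)); destruct (Nat.eqb_spec k j); try lia; auto;
    destruct (Nat.eqb_spec (30 + k) (30 + i)); destruct (Nat.eqb_spec k i); try lia; auto.
Qed.

Lemma shift30_upd {M : Type} v (Hv : v < 30) : forall (E : nat -> M) a, shift30 (upd E v a) = shift30 E.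
Proof. intros E a. apply functional_extensionality. intro k. unfold shift30. apply upd_neq. lia. Qed.

Definition COLL4 (phi : form) (i j : nat) : form :=
  FEx 8 (FAll 9 (FImp (FMem 9 4) (FEx 10 (FAnd (FMem 10 8) (QF phi i j 9 10))))).

Definition FILT (phi : form) (i j : nat) : form :=
  FAnd (FNot (FUr 3))
  (FAnd (FAll 4 (FImp (FMem 4 3) (SUBS 4 0)))
  (FAnd (FMem 0 3)
  (FAnd (FAll 4 (FImp (FMem 4 3) (FNot (COLL4 phi i j))))
  (FAnd (FAll 4 (FAll 5 (FAll 6 (FImp (FMem 4 3) (FImp (FMem 5 3) (FImp (FNot (FUr 6))
          (FImp (FAll 7 (FIff (FMem 7 6) (FAnd (FMem 7 4) (FMem 7 5)))) (FMem 6 3))))))))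
        (FAll 4 (FAll 5 (FImp (FMem 4 3) (FImp (SUBS 5 0)
          (FImp (FAll 7 (FImp (FMem 7 4) (FMem 7 5))) (FMem 5 3)))))))))).

Section Dir2.
Variable U : structure.
Hypothesis HZ : ZFCU_R U.
Local Notation "a ∈ b" := (smem U a b) (at level 70).
Local Notation A := (sur U).
Variable phi : form.
Variables i j : nat.
Variable e : nat -> U.
Variable w : U.
Local Notation Q := (QQ U phi i j e).

Definition CollP (P : U -> Prop) := exists v, forall a, P a -> exists b, b ∈ v /\ Q a b.
Definition CollS (B : U) := CollP (fun a => a ∈ B).

Definition isFilt (G : U) : Prop :=
  ~ A G /\ (forall B, B ∈ G -> subset_of U B w) /\ w ∈ G /\ (forall B, B ∈ G -> ~ CollS B) /\
  (forall B C D, B ∈ G -> C ∈ G -> ~ A D -> (forall z, z ∈ D <-> (z ∈ B /\ z ∈ C)) -> D ∈ G) /\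
  (forall B C, B ∈ G -> subset_of U C w -> (forall z, z ∈ B -> z ∈ C) -> C ∈ G).

Lemma FILT_ok (E0 : nat -> U) G : E0 0 = w -> shift30 E0 = e ->
  (sat U (upd E0 3 G) (FILT phi i j) <-> isFilt G).
Proof.
  intros H0 HE. unfold FILT, COLL4, FIff. cbn [sat].
  setoid_rewrite SUBS_ok. setoid_rewrite (QF_ok U phi i j 9 10 ltac:(lia) ltac:(lia)).
  setoid_rewrite (shift30_upd 10 ltac:(lia)). setoid_rewrite (shift30_upd 9 ltac:(lia)).
  setoid_rewrite (shift30_upd 8 ltac:(lia)). setoid_rewrite (shift30_upd 4 ltac:(lia)).
  setoid_rewrite (shift30_upd 3 ltac:(lia)). rewrite HE.
  cbn [upd Nat.eqb]. rewrite H0. unfold isFilt, CollS, CollP. firstorder.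
Qed.

Lemma CollP_mono (P P' : U -> Prop) : CollP P -> (forall a, P' a -> P a) -> CollP P'.
Proof. intros [v Hv] H. exists v. intros a Ha. apply Hv, H, Ha. Qed.

Lemma CollP_union (P1 P2 : U -> Prop) : CollP P1 -> CollP P2 -> CollP (fun a => P1 a \/ P2 a).
Proof.
  intros [v1 H1] [v2 H2]. destruct (ex_union2 U HZ v1 v2) as [v [_ Hv]]. exists v.
  intros a [Ha|Ha]; [destruct (H1 a Ha) as [b [Hb HQ]]|destruct (H2 a Ha) as [b [Hb HQ]]];
  exists b; split; auto; apply Hv; auto.
Qed.

Lemma ex_inter (a b : U) : exists c, ~ A c /\ forall z, z ∈ c <-> (z ∈ a /\ z ∈ b).
Proof.
  destruct (zf_sep U HZ (FMem 0 1) 0 (fun _ => b) a) as [c [Hc1 Hc2]]. exists c. split; [auto|].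
  intro z. rewrite Hc2. cbn [sat]. unfold upd; eqbs. tauto.
Qed.

Hypothesis Hall : forall a, a ∈ w -> exists b, Q a b.
Hypothesis Hfail : ~ CollS w.

Lemma w_ne : exists a, a ∈ w.
Proof. apply NNPP. intro H. apply Hfail. exists w. intros a Ha. exfalso. apply H. eauto. Qed.
Lemma w_nA : ~ A w.
Proof. intro H. destruct w_ne as [a Ha]. apply (zf_urel U HZ w H a Ha). Qed.

Lemma dir2 : exists M, is_ultrafilter U M w /\ forall B, B ∈ M -> ~ CollS B.
Proof.
  destruct (zf_power U HZ w) as [Pw [HPwA HPw]].
  destruct (zf_power U HZ Pw) as [PPw [HPPwA HPPw]].
  set (E0 := fun v => match v with 0 => w | _ => e (v - 30) end).
  assert (HE0 : shift30 E0 = e).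
  { apply functional_extensionality. intro k. unfold shift30, E0. simpl. f_equal. lia. }
  destruct (zf_sep U HZ (FILT phi i j) 3 E0 PPw) as [FS [HFSA HFS0]].
  assert (HFS : forall G, G ∈ FS <-> isFilt G).
  { intro G. rewrite HFS0. rewrite (FILT_ok E0 G eq_refl HE0). split; [tauto|].
    intros HG. split; [|exact HG]. apply HPPw. destruct HG as [HG1 [HG2 _]].
    split; [exact HG1|]. intros B HB. apply HPw. apply HG2; auto. }
  destruct (zf_choice U HZ FS HFSA) as [r [_ Hwo]].
  destruct (ex_sing U HZ w) as [sw [HswA Hsw]].
  assert (Hwsub : subset_of U w w) by (split; [apply w_nA|auto]).
  assert (Hswf : isFilt sw).
  { split; [auto|split; [|split; [|split; [|split]]]].
    - intros B HB. apply Hsw in HB. subst. auto.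
    - apply Hsw. auto.
    - intros B HB. apply Hsw in HB. subst. auto.
    - intros B C D HB HC HD HDm. apply Hsw in HB. apply Hsw in HC. subst. apply Hsw.
      apply (zf_ext U HZ); auto. apply w_nA. intro z. rewrite HDm. tauto.
    - intros B C HB HC HBC. apply Hsw in HB. subst. apply Hsw.
      apply (zf_ext U HZ); [apply HC|apply w_nA|]. intro z. split; [apply HC|apply HBC]. }
  destruct (zorn_chain U HZ FS r HFSA Hwo (ex_intro _ sw (proj2 (HFS sw) Hswf)))
    as [Ch [HChA [HChF [[G0 HG0] [Hchain HChmax]]]]].
  assert (HChf : forall G, G ∈ Ch -> isFilt G) by (intros G HG; apply HFS; auto).
  destruct (zf_union U HZ Ch) as [M [HMA HM]].
  assert (M_w : w ∈ M) by (apply HM; exists G0; split; auto; apply (HChf G0 HG0)).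
  assert (M_sub : forall B, B ∈ M -> subset_of U B w).
  { intros B HB. apply HM in HB. destruct HB as [G [HG HB]]. apply (HChf G HG); auto. }
  assert (M_nc : forall B, B ∈ M -> ~ CollS B).
  { intros B HB. apply HM in HB. destruct HB as [G [HG HB]]. apply (HChf G HG); auto. }
  assert (M_int : forall a b c, a ∈ M -> b ∈ M -> ~ A c -> (forall z, z ∈ c <-> (z ∈ a /\ z ∈ b)) -> c ∈ M).
  { intros a b c Ha Hb Hc Hcm. apply HM in Ha. apply HM in Hb.
    destruct Ha as [G1 [HG1 Ha]]. destruct Hb as [G2 [HG2 Hb]].
    destruct (Hchain G1 G2 HG1 HG2) as [Hs|Hs].
    - apply HM. exists G2. split; auto. apply (HChf G2 HG2) with a b; auto.
    - apply HM. exists G1. split; auto. apply (HChf G1 HG1) with a b; auto. }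
  assert (M_up : forall a b, a ∈ M -> subset_of U b w -> (forall z, z ∈ a -> z ∈ b) -> b ∈ M).
  { intros a b Ha Hb Hab. apply HM in Ha. destruct Ha as [G [HG Ha]].
    apply HM. exists G. split; auto. apply (HChf G HG) with a; auto. }
  assert (M_ext : forall B, subset_of U B w -> (forall D, D ∈ M -> ~ CollP (fun z => z ∈ D /\ z ∈ B)) -> B ∈ M).
  { intros B HB HnC.
    destruct (zf_sep U HZ (FEx 6 (FAnd (FMem 6 4) (FAll 7 (FImp (FMem 7 6) (FImp (FMem 7 5) (FMem 7 3))))))
       3 (fun v => match v with 4 => M | 5 => B | _ => w end) Pw) as [MB [HMBA HMB0]].
    assert (HMB : forall C, C ∈ MB <-> subset_of U C w /\ exists D, D ∈ M /\ forall z, z ∈ D -> z ∈ B -> z ∈ C).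
    { intro C. rewrite HMB0, HPw. cbn [sat]. unfold upd; eqbs. reflexivity. }
    assert (HMBf : isFilt MB).
    { split; [auto|split; [|split; [|split; [|split]]]].
      - intros C HC. apply HMB in HC. tauto.
      - apply HMB. split; auto. exists w. split; auto.
      - intros C HC HCc. apply HMB in HC. destruct HC as [_ [D [HD HDC]]].
        apply (HnC D HD). apply (CollP_mono _ _ HCc). intros a [H1 H2]. auto.
      - intros C1 C2 Dd HC1 HC2 HDdA HDd. apply HMB in HC1. apply HMB in HC2.
        destruct HC1 as [HC1w [D1 [HD1 HD1C]]]. destruct HC2 as [HC2w [D2 [HD2 HD2C]]].
        apply HMB. split.
        + split; auto. intros z Hz. apply HDd in Hz. apply HC1w. tauto.
        + destruct (ex_inter D1 D2) as [D [HDA HD]]. exists D. split.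
          * apply (M_int D1 D2 D); auto.
          * intros z Hz HzB. apply HD in Hz. apply HDd. split; [apply HD1C|apply HD2C]; tauto.
      - intros C C' HC HC' HCC'. apply HMB in HC. destruct HC as [_ [D [HD HDC]]].
        apply HMB. split; auto. exists D. split; auto. }
    assert (HMBch : MB ∈ Ch).
    { apply HChmax; [apply HFS; auto|]. intros H HH z Hz. apply HMB. split.
      - apply M_sub. apply HM. eauto.
      - exists z. split; [apply HM; eauto|auto]. }
    apply HM. exists MB. split; auto. apply HMB. split; auto. exists w. split; auto. }
  exists M. split; [|auto].
  split; [auto|split; [apply w_nA|split; [auto|split; [auto|split; [|split; [auto|split; [auto|]]]]]]].
  - intros s Hs. apply NNPP. intro Hn. apply (M_nc s Hs). exists w. intros a Ha. exfalso. apply Hn. eauto.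
  - intros s Hs. destruct (classic (exists D, D ∈ M /\ CollP (fun z => z ∈ D /\ z ∈ s))) as [[D1 [HD1 HC1]]|Hn].
    + right. intros c HcA Hc. apply M_ext.
      * split; auto. intros z Hz. apply Hc in Hz. tauto.
      * intros D2 HD2 HC2. destruct (ex_inter D1 D2) as [D [HDA HD]].
        apply (M_nc D); [apply (M_int D1 D2 D); auto|].
        apply (CollP_mono _ _ (CollP_union _ _ HC1 HC2)). intros a Ha. apply HD in Ha.
        destruct (classic (a ∈ s)); [left; tauto|right]. split; [tauto|]. apply Hc. split; [|auto].
        apply (M_sub D1 HD1). tauto.
    + left. apply M_ext; auto. intros D HD HC. apply Hn. eauto.
Qed.

End Dir2.


Section Final.
Variable U : structure.
Hypothesis HZ : ZFCU_R U.
Local Notation "a ∈ b" := (smem U a b) (at level 70).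
Local Notation A := (sur U).

Lemma ex_const (w c : U) : exists g, fun_on U g w /\ forall a b, a ∈ w -> (app U g a b <-> b = c).
Proof.
  destruct (ex_sing U HZ c) as [sc Hsc].
  assert (P1 : forall a, a ∈ w -> exists b, sat U (upd (upd (fun _ => c) 0 a) 1 b) (FEq 1 2) /\
      forall b', sat U (upd (upd (fun _ => c) 0 a) 1 b') (FEq 1 2) -> b' = b).
  { intros a Ha. exists c. cbn [sat]; unfold upd; eqbs; try split; auto. }
  assert (P2 : forall a b, a ∈ w -> sat U (upd (upd (fun _ => c) 0 a) 1 b) (FEq 1 2) -> b ∈ sc).
  { intros a b Ha Hb. cbn [sat] in Hb. revert Hb; unfold upd; eqbs. intros ->. apply Hsc. auto. }
  destruct (build_fun U HZ w sc (FEq 1 2) (fun _ => c) P1 P2) as [g [Hg Hgapp]].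
  exists g. split; [auto|]. intros a b Ha. rewrite Hgapp by auto. cbn [sat]. unfold upd; eqbs. tauto.
Qed.

Lemma ex_id (w : U) : exists g, fun_on U g w /\ forall a b, a ∈ w -> (app U g a b <-> b = a).
Proof.
  assert (P1 : forall a, a ∈ w -> exists b, sat U (upd (upd (fun _ => w) 0 a) 1 b) (FEq 1 0) /\
      forall b', sat U (upd (upd (fun _ => w) 0 a) 1 b') (FEq 1 0) -> b' = b).
  { intros a Ha. exists a. cbn [sat]; unfold upd; eqbs; try split; auto. }
  assert (P2 : forall a b, a ∈ w -> sat U (upd (upd (fun _ => w) 0 a) 1 b) (FEq 1 0) -> b ∈ w).
  { intros a b Ha Hb. cbn [sat] in Hb. revert Hb; unfold upd; eqbs. intros ->. auto. }
  destruct (build_fun U HZ w w (FEq 1 0) (fun _ => w) P1 P2) as [g [Hg Hgapp]].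
  exists g. split; [auto|]. intros a b Ha. rewrite Hgapp by auto. cbn [sat]. unfold upd; eqbs. tauto.
Qed.

Lemma dir2_los (phi : form) (i j : nat) (e : nat -> U) (w : U)
  (Hall : forall a, a ∈ w -> exists b, QQ U phi i j e a b)
  (M : U) (HUM : is_ultrafilter U M w) (HMn : forall B, B ∈ M -> ~ CollS U phi i j e B) :
  ~ Los U M w.
Proof.
  intros HL.
  assert (Hw : exists a, a ∈ w).
  { pose proof HUM as (_&_&_&HwM&Hne&_). apply Hne; auto. }
  destruct Hw as [a0 Ha0].
  destruct (ex_id w) as [idf [Hidf Hidapp]].
  set (cf := fun c : U => epsilon (inhabits a0) (fun g => fun_on U g w /\ forall a b, a ∈ w -> (app U g a b <-> b = c))).
  assert (Hcf : forall c, fun_on U (cf c) w /\ forall a b, a ∈ w -> (app U (cf c) a b <-> b = c)).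
  { intro c. unfold cf. apply epsilon_spec. apply ex_const. }
  set (f := fun k => if Nat.eqb k i then idf else cf (e k)).
  assert (Hf : forall k, fun_on U (f k) w).
  { intro k. unfold f. destruct (Nat.eqb k i); auto. apply Hcf. }
  assert (Hfapp : forall k y b, y ∈ w -> (app U (f k) y b <-> b = upd e i y k)).
  { intros k y b Hy. unfold f, upd. destruct (Nat.eqb k i); auto. apply Hcf; auto. }
  set (rho := fun k => mkcls U M w (f k) (Hf k)).
  assert (Hrho : forall k, proj1_sig (rho k) (f k)) by (intro k; apply (mkcls_in U HZ M w HUM)).
  pose proof (HL (FEx j phi) rho f Hrho) as L1.
  assert (R1 : inF U M w (fun y => exists g, (forall k, app U (f k) y (g k)) /\ sat U g (FEx j phi))).
  { apply (inF_full U HZ M w HUM). intros y Hy. exists (upd e i y). split.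
    - intro k. apply Hfapp; auto.
    - cbn [sat]. apply Hall; auto. }
  apply L1 in R1. cbn [sat] in R1. destruct R1 as [D HD].
  destruct (cls_rep U HZ M w HUM D) as [h Hh].
  pose proof (cls_fun U M w D h Hh) as Fh.
  pose proof (HL phi (upd rho j D) (upd f j h) (rho_upd U M w rho f j D h Hrho Hh)) as L2.
  apply L2 in HD. destruct HD as [s [HsM [HsA Hs]]].
  destruct (zf_repl U HZ (APP 2 0 1) 0 1 (fun _ => h) w) as [v Hv].
  { intros a Ha. exists (fv U h a). rewrite APP_ok. cbn [upd Nat.eqb]. split.
    - apply (fv_app U h w); auto.
    - intros b'. rewrite APP_ok. cbn [upd Nat.eqb]. intro Hb'. apply (fv_app U h w); auto. }
  apply (HMn s HsM). exists v. intros a Ha. apply Hs in Ha. destruct Ha as [Haw [g [Hg Hsat]]].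
  destruct (Hv a Haw) as [b [Hbv Hb]]. rewrite APP_ok in Hb. cbn [upd Nat.eqb] in Hb.
  exists b. split; auto. unfold QQ. revert Hsat. apply sat_ext_all. intro k.
  specialize (Hg k). unfold upd in Hg |- *. destruct (Nat.eqb_spec k j).
  - apply (fv_app U h w) in Hg; auto. apply (fv_app U h w) in Hb; auto. congruence.
  - apply Hfapp in Hg; auto; rewrite Hg; reflexivity.
Qed.

End Final.

Theorem mainTheorem12 (U : structure) :
  ZFCU_R U ->
  (Collection U <->
   forall F x : U, is_ultrafilter U F x -> Los U F x).
Proof.
  intros HZ. split.
  - intros HC F x HU. apply (LOS_full U HZ F x HU HC).
  - intros HL phi i j e w Hall. apply NNPP. intro Hfail.
    destruct (dir2 U HZ phi i j e w Hfail) as [M [HUM HMn]].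
    apply (dir2_los U HZ phi i j e w Hall M HUM HMn). apply HL; auto.
Qed.
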